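(* Let $\mathsf{T}$ be a rooted plane tree and $\delta\in\mathcal{O}(\mathsf{T})$. For each $u\in\mathsf{T}$, let $o_u$ be the minimal ornament of $\delta$ (i.e., among the sets $\delta(w)$, $w\in\mathsf{T}$) that properly contains $\delta(u)$; if no such ornament exists, let $o_u=\mathsf{T}$. Then $\delta\in\mathsf{Pop}(\mathcal{O}(\mathsf{T}))$ if and only if for every $u\in\mathsf{T}$ and every child $u'$ of $u$ with $u'\in\delta(u)$, we have $\Delta_{\delta(u)}(u')\neq\Delta_{o_u}(u')$.
   Context: A rooted plane tree $\mathsf{T}$ is a finite tree with a distinguished root $\mathfrak{r}$, regarded as a poset $\leq_\mathsf{T}$ in which $v'\leq_\mathsf{T} v$ iff $v$ lies on the path from $v'$ to $\mathfrak{r}$; the children of $v$ are the nodes covered by $v$. An ornament of $\mathsf{T}$ is a nonempty set of nodes inducing a connected subgraph. For a set $S$ of nodes and $u\in S$, $\Delta_S(u)=\{w\in S:w\leq_\mathsf{T} u\}$. An ornamentation of $\mathsf{T}$ is a map $\delta$ from $\mathsf{T}$ to ornaments such that (1) for every $v$, the unique maximal element of $\delta(v)$ is $v$; (2) for all $v,v'$, $\delta(v)$ and $\delta(v')$ are either nested or disjoint. $\mathcal{O}(\mathsf{T})$ is the set of ornamentations ordered by $\delta\leq\delta'$ iff $\delta(v)\subseteq\delta'(v)$ for all $v$; it is a lattice with meet $(\delta\wedge\delta')(v)=\delta(v)\cap\delta'(v)$. The pop-stack operator is $\mathsf{Pop}(\delta)=\bigwedge(\{\delta\}\cup\{\delta':\delta'\lessdot\delta\})$,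 where $\lessdot$ denotes the cover relation of $\mathcal{O}(\mathsf{T})$. *)

(* Defs.v *)
(* A rooted tree is encoded on a finite type V of nodes by a
   parent map [par] with [par r = r] and every node reaching the root [r]. *)
From mathcomp Require Import all_boot.
Set Implicit Arguments. Unset Strict Implicit. Unset Printing Implicit Defensive.

Section Ornaments.
Variables (V : finType) (r : V) (par : V -> V).

Definition is_rooted_tree : Prop :=
  par r = r /\ forall v : V, exists k : nat, iter k par v = r.

Definition leT (v' v : V) : bool := [exists k : 'I_#|V|, iter k par v' == v].

Definition childT (u' u : V) : bool := (u' != u) && (par u' == u).

Definition adjT (x y : V) : bool := (x != y) && ((par x == y) || (par y == x)).

Definition connectedT (S : {set V}) : bool :=
  [forall x in S, forall y in S,
     connect [rel a b | [&& a \in S, b \in S & adjT a b]] x y].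

Definition ornament (S : {set V}) : bool := (S != set0) && connectedT S.

Definition is_maximal (S : {set V}) (w : V) : bool :=
  (w \in S) && [forall x in S, leT w x ==> (x == w)].

Definition ornamentation (d : {ffun V -> {set V}}) : bool :=
  [forall v, ornament (d v) && ([set w in d v | is_maximal (d v) w] == [set v])]
  && [forall v, forall v', [|| d v \subset d v', d v' \subset d v
                             | [disjoint d v & d v']]].

Definition leO (d d' : {ffun V -> {set V}}) : bool := [forall v, d v \subset d' v].
Definition ltO (d d' : {ffun V -> {set V}}) : bool := leO d d' && (d != d').

Definition coverO (d' d : {ffun V -> {set V}}) : bool :=
  [&& ornamentation d', ornamentation d, ltO d' d &
      ~~ [exists d'' : {ffun V -> {set V}},
            [&& ornamentation d'', ltO d' d'' & ltO d'' d]]].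

(* Pop(d) = meet of {d} and its lower covers; the meet is pointwise intersection *)
Definition Pop (d : {ffun V -> {set V}}) : {ffun V -> {set V}} :=
  [ffun v => d v :&: \bigcap_(d' | coverO d' d) d' v].

Definition in_Pop_image (d : {ffun V -> {set V}}) : Prop :=
  exists d0, ornamentation d0 /\ Pop d0 = d.

Definition DeltaS (S : {set V}) (u : V) : {set V} := [set w in S | leT w u].

Definition is_o (d : {ffun V -> {set V}}) (u : V) (S : {set V}) : Prop :=
  ((exists w, S = d w) /\ d u \proper S /\
     forall w', d u \proper d w' -> ~~ (d w' \proper S))
  \/ ((forall w, ~~ (d u \proper d w)) /\ S = [set: V]).

End Ornaments.

(* Main.v *)
Require Import Defs.
From mathcomp Require Import all_boot.
Set Implicit Arguments. Unset Strict Implicit. Unset Printing Implicit Defensive.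

Section Tree.
Variables (V : finType) (r : V) (par : V -> V).
Hypothesis Htree : is_rooted_tree r par.

Local Notation le := (leT par).

Lemma iter_root k : iter k par r = r.
Proof. by case: Htree => Hr _; elim: k => //= k ->. Qed.

Lemma leP x y : reflect (exists k, iter k par x = y) (le x y).
Proof.
apply: (iffP existsP) => [[k /eqP <-]|[k <-]]; first by exists k.
have Hc : fconnect par x (iter k par x) by apply: fconnect_iter.
have Hlt := findex_max Hc.
have Ho : order par x <= #|V| by rewrite /order max_card.
exists (Ordinal (leq_trans Hlt Ho)) => /=.
by rewrite iter_findex.
Qed.

Lemma le_refl x : le x x.
Proof. by apply/leP; exists 0. Qed.

Lemma le_trans x y z : le x y -> le y z -> le x z.
Proof.
move=> /leP [a <-] /leP [b <-]; apply/leP; exists (b + a).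
by rewrite iterD.
Qed.

Lemma le_par x : le x (par x).
Proof. by apply/leP; exists 1. Qed.

Lemma le_root x : le x r.
Proof. case: Htree => _ /(_ x) [k Hk]; apply/leP; by exists k. Qed.

Lemma root_le v : le r v -> v = r.
Proof. by move=> /leP [k <-]; rewrite iter_root. Qed.

Lemma par_fix x : par x = x -> x = r.
Proof.
move=> Hx; case: Htree => _ /(_ x) [k Hk].
suff E : forall j, iter j par x = x by rewrite -Hk E.
by elim=> //= j ->.
Qed.

Lemma le_antisym x y : le x y -> le y x -> x = y.
Proof.
move=> /leP [a Ha] /leP [b Hb].
case: a Ha => [|a] Ha; first by [].
have Hcyc : forall m, iter (m * (b + a.+1)) par x = x.
  by elim=> // m IH; rewrite mulSn iterD IH iterD Ha Hb.
have Hx : x = r.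
  case: Htree => _ /(_ x) [k Hk].
  rewrite -(Hcyc k).
  have : k <= k * (b + a.+1) by rewrite leq_pmulr // addnS.
  move/subnK => <-; by rewrite iterD Hk iter_root.
by move: Ha; rewrite Hx iter_root.
Qed.

Lemma le_total w a b : le w a -> le w b -> le a b || le b a.
Proof.
move=> /leP [i <-] /leP [j <-].
case: (leqP i j) => Hij.
- apply/orP; left; apply/leP; exists (j - i); by rewrite -iterD subnK.
- apply/orP; right; apply/leP; exists (i - j); rewrite -iterD subnK //.
  exact: ltnW.
Qed.

Lemma le_step w v : le w v -> w != v -> le (par w) v.
Proof.
move=> /leP [[|k] Hk] Hne; first by move: Hne; rewrite -Hk /= eqxx.
by apply/leP; exists k; rewrite -iterSr.
Qed.

Lemma le_child y u : le y u -> y != u -> exists c, [/\ par c = u, c != u & le y c].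
Proof.
move=> /leP [k Hk]; elim: k y Hk => [|k IH] y Hk Hne.
  by move: Hne; rewrite -Hk /= eqxx.
rewrite iterSr in Hk.
case: (eqVneq (par y) u) => Hp.
  by exists y; split => //; apply: le_refl.
have [c [H1 H2 H3]] := IH _ Hk Hp.
by exists c; split => //; apply: le_trans (le_par y) H3.
Qed.

Definition Up x := [set y | le x y].
Definition Dn x := [set y | le y x].

Lemma Up_lt x w : le x w -> x != w -> #|Up w| < #|Up x|.
Proof.
move=> Hxw Hne; apply: proper_card; apply/properP; split.
  by apply/subsetP => y; rewrite !inE => /(le_trans Hxw).
exists x; rewrite !inE ?le_refl //; apply/negP => Hwx.
by rewrite (le_antisym Hxw Hwx) eqxx in Hne.
Qed.

Lemma Dn_lt x w : le x w -> x != w -> #|Dn x| < #|Dn w|.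
Proof.
move=> Hxw Hne; apply: proper_card; apply/properP; split.
  by apply/subsetP => y; rewrite !inE => /le_trans; apply.
exists w; rewrite !inE ?le_refl //; apply/negP => Hwx.
by rewrite (le_antisym Hxw Hwx) eqxx in Hne.
Qed.

Lemma ex_maxl (P : pred V) x : P x ->
  exists m, P m /\ forall m', P m' -> le m m' -> m' = m.
Proof.
move=> Px; case: (arg_minnP (fun y => #|Up y|) Px) => m Pm Hm.
exists m; split => // m' Pm' Hle; apply/eqP; rewrite eq_sym; apply/negPn/negP => Hne.
by have := Hm _ Pm'; rewrite leqNgt (Up_lt Hle Hne).
Qed.

Lemma ex_minl (P : pred V) x : P x ->
  exists m, P m /\ forall m', P m' -> le m' m -> m' = m.
Proof.
move=> Px; case: (arg_minnP (fun y => #|Dn y|) Px) => m Pm Hm.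
exists m; split => // m' Pm' Hle; apply/eqP; apply/negPn/negP => Hne.
by have := Hm _ Pm'; rewrite leqNgt (Dn_lt Hle Hne).
Qed.


Definition good (S : {set V}) v :=
  (v \in S) && [forall w in S, le w v && ((w != v) ==> (par w \in S))].

Lemma goodP (S : {set V}) v : reflect (v \in S /\ forall w, w \in S -> le w v /\ (w != v -> par w \in S))
  (good S v).
Proof.
apply: (iffP andP) => [[Hv /forall_inP H]|[Hv H]]; split => //.
  by move=> w /H /andP [-> /implyP].
by apply/forall_inP => w /H [-> /implyP].
Qed.

Lemma good_in (S : {set V}) v : good S v -> v \in S.
Proof. by case/goodP. Qed.

Lemma good_le (S : {set V}) v w : good S v -> w \in S -> le w v.
Proof. by case/goodP => _ H /H []. Qed.

Lemma good_par (S : {set V}) v w : good S v -> w \in S -> w != v -> par w \in S.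
Proof. by case/goodP => _ H /H []. Qed.

Lemma good_path (S : {set V}) v x y : good S v -> x \in S -> le x y -> le y v -> y \in S.
Proof.
move=> Hg Hx /leP [k <-]; elim: k x Hx => [|k IH] x Hx Hyv //.
rewrite iterSr in Hyv *.
case: (eqVneq x v) => Hxv.
  subst x; have Hvy : le v (iter k par (par v)).
    by apply: le_trans (le_par v) _; apply/leP; exists k.
  by rewrite (le_antisym Hyv Hvy); apply: good_in Hg.
by apply: IH => //; apply: good_par Hg Hx Hxv.
Qed.

Definition erel (S : {set V}) := [rel a b | [&& a \in S, b \in S & adjT par a b]].

Lemma par_neq x v : le x v -> x != v -> par x != x.
Proof.
move=> Hxv Hne; apply/eqP => /par_fix Hx; subst x.
by rewrite (root_le Hxv) eqxx in Hne.
Qed.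

Lemma up_conn (S : {set V}) v x : good S v -> x \in S -> connect (erel S) x v && connect (erel S) v x.
Proof.
move=> Hg Hx; have := good_le Hg Hx => /leP [k Hk].
elim: k x Hx Hk => [|k IH] x Hx Hk; first by rewrite -Hk /= connect0.
case: (eqVneq x v) => Hxv; first by rewrite Hxv connect0.
rewrite iterSr in Hk.
have Hpx := good_par Hg Hx Hxv.
have /andP [H1 H2] := IH _ Hpx Hk.
have Hn : par x != x by apply: par_neq (good_le Hg Hx) Hxv.
have Ha : erel S x (par x) by rewrite /= Hx Hpx /adjT eq_sym Hn eqxx.
have Hb : erel S (par x) x by rewrite /= Hx Hpx /adjT Hn eqxx orbT.
apply/andP; split.
  by apply: (@connect_trans _ _ (par x)) H1; apply: connect1.
by apply: (@connect_trans _ _ (par x)) H2 _; apply: connect1.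
Qed.

Lemma good_orn (S : {set V}) v : good S v ->
  ornament par S && ([set w in S | is_maximal par S w] == [set v]).
Proof.
move=> Hg; apply/andP; split.
  apply/andP; split.
    by apply/set0Pn; exists v; apply: good_in Hg.
  apply/forall_inP => x Hx; apply/forall_inP => y Hy.
  have /andP [H1 _] := up_conn Hg Hx.
  have /andP [_ H2] := up_conn Hg Hy.
  exact: connect_trans H1 H2.
apply/eqP/setP => w; rewrite !inE /is_maximal.
apply/idP/idP => [/andP [Hw /andP [_ /forall_inP Hm]]|/eqP ->].
  by apply/eqP/esym/eqP; move: (Hm v (good_in Hg)); rewrite (good_le Hg Hw).
have Hv := good_in Hg; rewrite Hv /=; apply/forall_inP => x Hx; apply/implyP => Hvx.
by rewrite (le_antisym (good_le Hg Hx) Hvx).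
Qed.

Lemma orn_good (S : {set V}) v : ornament par S ->
  [set w in S | is_maximal par S w] == [set v] -> good S v.
Proof.
move=> /andP [_ Hc] /eqP Hm.
have Hv : v \in S /\ is_maximal par S v.
  by have := set11 v; rewrite -Hm inE => /andP [H1 H2].
have Hle : forall w, w \in S -> le w v.
  move=> w Hw.
  have [m [/andP [Hm1 Hm2] Hmax]] := @ex_maxl [pred m | (m \in S) && le w m] w
    (introT andP (conj Hw (le_refl w))).
  have : m \in [set w in S | is_maximal par S w].
    rewrite inE Hm1 /is_maximal Hm1 /=; apply/forall_inP => x Hx; apply/implyP => Hmx.
    by apply/eqP; apply: Hmax => //=; rewrite Hx (le_trans Hm2 Hmx).
  by rewrite Hm inE => /eqP <-.
apply/goodP; split; first by case: Hv.
move=> w Hw; split; first exact: Hle.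
move=> Hwv.
have Hcon : connect (erel S) w v by move/forall_inP: Hc => /(_ _ Hw) /forall_inP; apply; case: Hv.
case/connectP: Hcon => p Hp Hlast.
have Hnl : ~~ le (last w p) w.
  rewrite -Hlast; apply/negP => Hvw.
  by rewrite (le_antisym (Hle _ Hw) Hvw) eqxx in Hwv.
suff Hclaim : forall x p, le x w -> path (erel S) x p -> ~~ le (last x p) w -> par w \in S.
  exact: Hclaim (le_refl w) Hp Hnl.
move=> x q; elim: q x => [|y q IH] x /= Hxw; first by move=> _ /negP.
case/andP => /and3P [Hx Hy Had] Hq Hn2.
case: (boolP (le y w)) => Hyw; first exact: IH Hyw Hq Hn2.
case/andP: Had => _ /orP [/eqP Hpx|/eqP Hpy].
  case: (eqVneq x w) => Hxw'; first by rewrite -Hxw' Hpx.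
  by have := le_step Hxw Hxw'; rewrite Hpx (negbTE Hyw).
by have := le_trans (le_par y) (etrans (congr1 (le^~ w) Hpy) Hxw); rewrite (negbTE Hyw).
Qed.

Local Notation orn := (ornamentation par).
Local Notation FF := {ffun V -> {set V}}.

Lemma orn_goodd (d : FF) v : orn d -> good (d v) v.
Proof.
move=> /andP [/forallP /(_ v) /andP [H1 H2] _]; exact: orn_good H1 H2.
Qed.

Lemma orn_nest (d : FF) a b t : orn d -> t \in d a -> t \in d b ->
  d a \subset d b \/ d b \subset d a.
Proof.
move=> /andP [_ /forallP /(_ a) /forallP /(_ b)] /or3P [H|H|H] Ha Hb.
- by left. - by right.
by rewrite (disjointFr H Ha) in Hb.
Qed.

Lemma orn_sub (d : FF) v w : orn d -> w \in d v -> d w \subset d v.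
Proof.
move=> Hd Hw.
have Hww := good_in (orn_goodd w Hd).
case: (orn_nest Hd Hww Hw) => // Hs.
have Hv : v \in d w := subsetP Hs _ (good_in (orn_goodd v Hd)).
have E := le_antisym (good_le (orn_goodd v Hd) Hw) (good_le (orn_goodd w Hd) Hv).
by rewrite E subxx.
Qed.

Lemma orn_intro (d : FF) : (forall v, good (d v) v) ->
  (forall v w, w \in d v -> d w \subset d v) -> orn d.
Proof.
move=> Hg Hs; apply/andP; split.
  by apply/forallP => v; apply: good_orn.
apply/forallP => v; apply/forallP => v'.
case: (boolP [disjoint d v & d v']) => Hdis; first by rewrite !orbT.
move: Hdis; rewrite -setI_eq0 => /set0Pn [t]; rewrite inE => /andP [Ht1 Ht2].
have H1 := good_le (Hg v) Ht1; have H2 := good_le (Hg v') Ht2.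
case/orP: (le_total H1 H2) => Hle.
  by rewrite (Hs v' v) //; apply: good_path (Hg v') Ht2 H1 Hle.
by rewrite (Hs v v') ?orbT //; apply: good_path (Hg v) Ht1 H2 Hle.
Qed.

Definition Val (d : FF) u x :=
  [&& x \in d u, x != u &
      [forall w, [&& le x w, le w u, w != x & w != u] ==> (x \notin d w)]].

Lemma Val_in d u x : Val d u x -> x \in d u. Proof. by case/and3P. Qed.
Lemma Val_neq d u x : Val d u x -> x != u. Proof. by case/and3P. Qed.
Lemma Val_btw d u x w : Val d u x -> le x w -> le w u -> w != x -> w != u -> x \notin d w.
Proof.
case/and3P => _ _ /forallP /(_ w) /implyP H H1 H2 H3 H4; apply: H.
by rewrite H1 H2 H3 H4.
Qed.
Lemma Val_intro (d : FF) u x : x \in d u -> x != u ->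
  (forall w, le x w -> le w u -> w != x -> w != u -> x \notin d w) -> Val d u x.
Proof.
move=> H1 H2 H3; rewrite /Val H1 H2; apply/forallP => w; apply/implyP.
by case/and4P => *; apply: H3.
Qed.

Definition Mn (d : FF) u y := Val d u y && [forall x, (Val d u x && le x y) ==> (x == y)].

Lemma Mn_val d u y : Mn d u y -> Val d u y. Proof. by case/andP. Qed.
Lemma Mn_min d u y x : Mn d u y -> Val d u x -> le x y -> x = y.
Proof.
case/andP => _ /forallP /(_ x) /implyP H Hx Hxy; apply/eqP; apply: H.
by rewrite Hx Hxy.
Qed.

Definition PopF (d : FF) u := [set z in d u | ~~ [exists y, Mn d u y && le z y]].

Definition rem (d : FF) u y : FF :=
  [ffun v => if v == u then [set z in d u | ~~ le z y] else d v].

Lemma ex_val (d : FF) u z : orn d -> z \in d u -> z != u ->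
  exists x, Val d u x /\ z \in d x.
Proof.
move=> Hd Hz Hzu.
pose P := [pred w | [&& le z w, le w u, w != u & z \in d w]].
have Pz : P z.
  by rewrite /= le_refl (good_le (orn_goodd u Hd) Hz) Hzu (good_in (orn_goodd z Hd)).
have [x [/and4P [Hzx Hxu Hxnu Hzdx] Hmax]] := ex_maxl Pz.
exists x; split => //.
apply: Val_intro => //.
  exact: good_path (orn_goodd u Hd) Hz Hzx Hxu.
move=> w Hxw Hwu Hwx Hwnu; apply/negP => Hxdw.
have Hzw : z \in d w := subsetP (orn_sub Hd Hxdw) _ Hzdx.
have Pw : P w by rewrite /= (le_trans Hzx Hxw) Hwu Hwnu Hzw.
by rewrite (Hmax _ Pw Hxw) eqxx in Hwx.
Qed.

Lemma ex_min (d : FF) u x : Val d u x -> exists y, Mn d u y /\ le y x.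
Proof.
move=> Hx.
pose P := [pred y | Val d u y && le y x].
have Px : P x by rewrite /= Hx le_refl.
have [y [/andP [Hy Hyx] Hmin]] := ex_minl Px.
exists y; split => //; rewrite /Mn Hy; apply/forallP => x'; apply/implyP.
case/andP => Hx' Hx'y; apply/eqP; apply: Hmin => //.
by rewrite /= Hx' (le_trans Hx'y Hyx).
Qed.

Lemma rem_orn (d : FF) u y : orn d -> Val d u y -> orn (rem d u y).
Proof.
move=> Hd Hy.
have Hyu := good_le (orn_goodd u Hd) (Val_in Hy).
apply: orn_intro.
  move=> v; rewrite ffunE; case: (eqVneq v u) => [->|Hvu]; last exact: orn_goodd.
  apply/goodP; split.
    rewrite inE (good_in (orn_goodd u Hd)) /=; apply/negP => Huy.
    by move: (Val_neq Hy); rewrite (le_antisym Hyu Huy) eqxx.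
  move=> w; rewrite inE => /andP [Hw Hwy]; split; first exact: good_le (orn_goodd u Hd) Hw.
  move=> Hwu; rewrite inE (good_par (orn_goodd u Hd) Hw Hwu) /=.
  by apply: contra Hwy; apply: le_trans (le_par w).
move=> v w; rewrite !ffunE.
case: (eqVneq v u) => [Ev|Hvu]; case: (eqVneq w u) => [Ew|Hwu]; try subst v; try subst w.
- move=> _; exact: subxx.
- rewrite inE => /andP [Hw Hwy]; apply/subsetP => t Ht.
  rewrite inE (subsetP (orn_sub Hd Hw) _ Ht) /=; apply/negP => Hty.
  have Htw := good_le (orn_goodd w Hd) Ht.
  case/orP: (le_total Htw Hty) => Hwy'; first by rewrite Hwy' in Hwy.
  have Hyw : w != y by apply: contraNneq Hwy => ->; apply: le_refl.
  have Hydw : y \in d w := good_path (orn_goodd w Hd) Ht Hty Hwy'.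
  by move: (Val_btw Hy Hwy' (good_le (orn_goodd u Hd) Hw) Hyw Hwu); rewrite Hydw.
- move=> Hu; apply: subset_trans (orn_sub Hd Hu).
  by apply/subsetP => t; rewrite inE => /andP [].
- exact: orn_sub.
Qed.

Lemma key (d d' : FF) u z : orn d -> orn d' ->
  (forall w, d w \proper d u -> d' w = d w) -> z \in d u -> z \notin d' u ->
  exists x, [/\ Val d u x, le z x & forall t, t \in d' u -> ~~ le t x].
Proof.
move=> Hd Hd' Hp Hz Hz'.
have Hzu : z != u.
  by apply: contraNneq Hz' => ->; apply: good_in (orn_goodd u Hd').
have [x [Hx Hzx]] := ex_val Hd Hz Hzu.
have Hlzx := good_le (orn_goodd x Hd) Hzx.
have Hxu := good_le (orn_goodd u Hd) (Val_in Hx).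
have Hprop : d x \proper d u.
  rewrite properEneq (orn_sub Hd (Val_in Hx)) andbT.
  apply/negP => /eqP E.
  have Hux : u \in d x by rewrite E; apply: good_in (orn_goodd u Hd).
  have := le_antisym Hxu (good_le (orn_goodd x Hd) Hux).
  by move/eqP; rewrite (negbTE (Val_neq Hx)).
have E := Hp _ Hprop.
exists x; split => // t Ht; apply/negP => Htx.
have Hxd' : x \in d' u := good_path (orn_goodd u Hd') Ht Htx Hxu.
have := subsetP (orn_sub Hd' Hxd') z; rewrite E => /(_ Hzx).
by rewrite (negbTE Hz').
Qed.

Lemma rem_lt (d : FF) u y : Val d u y -> ltO (rem d u y) d.
Proof.
move=> Hy; apply/andP; split.
  apply/forallP => v; rewrite ffunE; case: eqP => [->|_]; last exact: subxx.
  by apply/subsetP => t; rewrite inE => /andP [].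
apply/negP => /eqP E.
have := Val_in Hy; rewrite -{1}E ffunE eqxx inE le_refl.
by rewrite andbF.
Qed.

Lemma rem_cover (d : FF) u y : orn d -> Mn d u y -> coverO par (rem d u y) d.
Proof.
move=> Hd Hm; have Hy := Mn_val Hm.
rewrite /coverO (rem_orn Hd Hy) Hd (rem_lt Hy) /=.
apply/existsP => [[d'' /and3P [Ho /andP [Hle1 Hne1] /andP [Hle2 Hne2]]]].
have Heq : forall w, w != u -> d'' w = d w.
  move=> w Hwu; apply/eqP; rewrite eqEsubset (forallP Hle2 w) /=.
  by move: (forallP Hle1 w); rewrite ffunE (negbTE Hwu).
have Hne : d'' u != d u.
  apply: contraNneq Hne2 => E; apply/eqP/ffunP => w.
  by case: (eqVneq w u) => [->|Hwu] //; apply: Heq.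
have Hpr : d'' u \proper d u by rewrite properEneq Hne (forallP Hle2 u).
case/properP: Hpr => _ [z Hz Hz''].
have Hp : forall w, d w \proper d u -> d'' w = d w.
  move=> w; case: (eqVneq w u) => [->|Hwu]; first by rewrite properxx.
  by move=> _; apply: Heq.
have [x [Hx Hzx Hnt]] := key Hd Ho Hp Hz Hz''.
have Hzy : le z y.
  case: (boolP (le z y)) => // Hzy; case/negP: Hz''.
  by apply: (subsetP (forallP Hle1 u)); rewrite ffunE eqxx inE Hz Hzy.
have Hyx : le y x.
  case/orP: (le_total Hzx Hzy) => H //.
  by rewrite (Mn_min Hm Hx H) le_refl.
have Hsub : d'' u \subset rem d u y u.
  apply/subsetP => t Ht; rewrite ffunE eqxx inE (subsetP (forallP Hle2 u) _ Ht) /=.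
  by apply: contra (Hnt _ Ht) => Hty; apply: le_trans Hty Hyx.
move/negP: Hne1; apply; apply/eqP/ffunP => w.
case: (eqVneq w u) => [->|Hwu].
  by apply/eqP; rewrite eqEsubset Hsub (forallP Hle1 u).
by rewrite Heq // ffunE (negbTE Hwu).
Qed.

Lemma cover_rem (d d' : FF) : orn d -> coverO par d' d ->
  exists u y, Mn d u y /\ d' = rem d u y.
Proof.
move=> Hd /and4P [Hd' _ /andP [Hle Hne] Hnb].
have [u0 Hu0] : exists u0, d' u0 != d u0.
  case: (pickP (fun u => d' u != d u)) => [u0 Hu0|Hn]; first by exists u0.
  by move/negP: Hne; case; apply/eqP/ffunP => u; move: (Hn u) => /negbFE /eqP.
case: (@arg_minnP _ u0 [pred u | d' u != d u] (fun u => #|d u|) Hu0) => u /= Hu Hmin.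
have Hp : forall w, d w \proper d u -> d' w = d w.
  move=> w Hw; apply/eqP/negPn/negP => Hw'.
  by have := Hmin _ Hw'; rewrite leqNgt (proper_card Hw).
have Hpr : d' u \proper d u by rewrite properEneq Hu (forallP Hle u).
case/properP: Hpr => _ [z Hz Hz'].
have [x [Hx Hzx Hnt]] := key Hd Hd' Hp Hz Hz'.
have [y [Hm Hyx]] := ex_min Hx.
exists u, y; split => //.
case: (eqVneq d' (rem d u y)) => // Hne'.
move/negP: Hnb; case; apply/existsP; exists (rem d u y).
rewrite (rem_orn Hd (Mn_val Hm)) (rem_lt (Mn_val Hm)) andbT /= /ltO Hne' andbT.
apply/forallP => v; rewrite ffunE; case: eqP => [->|_]; last exact: (forallP Hle v).
apply/subsetP => t Ht; rewrite inE (subsetP (forallP Hle u) _ Ht) /=.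
by apply: contra (Hnt _ Ht) => Hty; apply: le_trans Hty Hyx.
Qed.

Lemma Pop_formula (d : FF) : orn d -> Pop par d = [ffun u => PopF d u].
Proof.
move=> Hd; apply/ffunP => u; rewrite !ffunE; apply/setP => z; rewrite !inE.
case: (boolP (z \in d u)) => Hz //=.
apply/bigcapP/negP => [H /existsP [y /andP [Hm Hzy]]|Hn d' Hc].
  have := H _ (rem_cover Hd Hm); rewrite ffunE eqxx inE Hz /=.
  by rewrite Hzy.
have [u0 [y [Hm ->]]] := cover_rem Hd Hc.
rewrite ffunE; case: (eqVneq u u0) => [E|_] //.
subst u0; rewrite inE Hz /=; apply/negP => Hzy; apply: Hn.
by apply/existsP; exists y; rewrite Hm Hzy.
Qed.

Definition po (d : FF) u :=
  [pick w | (d u \proper d w) && [forall w', (d u \proper d w') ==> ~~ (d w' \proper d w)]].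
Definition ofn (d : FF) u : {set V} := if po d u is Some w then d w else setT.

Lemma ofn_spec (d : FF) u :
  (ofn d u = setT /\ forall w, ~~ (d u \proper d w)) \/
  (exists q, [/\ ofn d u = d q, d u \proper d q &
     forall w', d u \proper d w' -> ~~ (d w' \proper d q)]).
Proof.
rewrite /ofn /po; case: pickP => [q /andP [H1 /forallP H2]|Hn].
  right; exists q; split => // w' Hw'; exact: (implyP (H2 w') Hw').
left; split => // w; apply/negP => Hw.
case: (@arg_minnP _ w [pred w | d u \proper d w] (fun w => #|d w|) Hw) => m /= Hm Hmin.
move: (Hn m); rewrite Hm /=; move/negbT/negP; apply.
apply/forallP => w'; apply/implyP => Hw'; apply/negP => Hp.
by have := Hmin _ Hw'; rewrite leqNgt (proper_card Hp).
Qed.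

Lemma is_o_ofn (d : FF) u : is_o d u (ofn d u).
Proof.
case: (ofn_spec d u) => [[H1 H2]|[q [H1 H2 H3]]]; [right|left] => //.
by rewrite H1; split => //; exists q.
Qed.

Lemma ofn_sup (d : FF) u : d u \subset ofn d u.
Proof.
case: (ofn_spec d u) => [[-> _]|[q [-> H _]]]; [exact: subsetT|exact: proper_sub].
Qed.

Lemma ofn_min (d : FF) u b : orn d -> d u \proper d b -> ofn d u \subset d b.
Proof.
move=> Hd Hb; case: (ofn_spec d u) => [[_ H]|[q [-> Hq Hmin]]].
  by rewrite (negbTE (H b)) in Hb.
have Hu := good_in (orn_goodd u Hd).
case: (orn_nest Hd (subsetP (proper_sub Hq) _ Hu) (subsetP (proper_sub Hb) _ Hu)) => // Hbq.
case: (eqVneq (d b) (d q)) => [<-|Hne]; first exact: subxx.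
by have := Hmin _ Hb; rewrite properEneq Hne Hbq.
Qed.

Lemma ofn_path (d : FF) u t s : orn d -> t \in ofn d u -> le t s -> le s u -> s \in ofn d u.
Proof.
move=> Hd; case: (ofn_spec d u) => [[-> _]|[q [-> Hq _]]]; first by rewrite in_setT.
move=> Ht Hts Hsu.
have Huq := good_le (orn_goodd q Hd) (subsetP (proper_sub Hq) _ (good_in (orn_goodd u Hd))).
exact: good_path (orn_goodd q Hd) Ht Hts (le_trans Hsu Huq).
Qed.

Lemma ofn_mono (d : FF) v w : orn d -> w \in ofn d v -> le w v -> w != v ->
  ofn d w \subset ofn d v.
Proof.
move=> Hd; case: (ofn_spec d v) => [[-> _]|[q [-> Hq _]]]; first by move=> *; apply: subsetT.
move=> Hw Hwv Hne; apply: ofn_min => //.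
have Hvq := good_le (orn_goodd q Hd) (subsetP (proper_sub Hq) _ (good_in (orn_goodd v Hd))).
rewrite properEneq (orn_sub Hd Hw) andbT; apply/negP => /eqP E.
have Hqw : q \in d w by rewrite E; apply: good_in (orn_goodd q Hd).
have Eqw := le_antisym (good_le (orn_goodd w Hd) Hqw) (le_trans Hwv Hvq).
have Evq : v = q by apply: (le_antisym Hvq); rewrite Eqw.
by rewrite Evq properxx in Hq.
Qed.

Lemma ofn_child (d : FF) u c : orn d -> c \in d u -> par c = u -> c != u -> ofn d c = d u.
Proof.
move=> Hd Hc Hpc Hcu.
have Hcu' : le c u by rewrite -Hpc; apply: le_par.
have Hpr : d c \proper d u.
  rewrite properEneq (orn_sub Hd Hc) andbT; apply/negP => /eqP E.
  have Huc : u \in d c by rewrite E; apply: good_in (orn_goodd u Hd).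
  by rewrite (le_antisym Hcu' (good_le (orn_goodd c Hd) Huc)) eqxx in Hcu.
case: (ofn_spec d c) => [[_ H]|[q [Eq Hq _]]]; first by rewrite (negbTE (H u)) in Hpr.
have Hsub := ofn_min Hd Hpr; rewrite Eq in Hsub *.
have Hcq : c \in d q := subsetP (proper_sub Hq) _ (good_in (orn_goodd c Hd)).
have Hcq' : c != q by apply: contraTneq Hq => ->; rewrite properxx.
have Huq : le u q by rewrite -Hpc; apply: le_step => //; apply: good_le (orn_goodd q Hd) Hcq.
have Hqu : le q u := good_le (orn_goodd u Hd) (subsetP Hsub _ (good_in (orn_goodd q Hd))).
by rewrite (le_antisym Hqu Huq).
Qed.

Definition E0 (d : FF) u := [set t in ofn d u | le t u].
Definition d0 (d : FF) : FF := [ffun u => E0 d u].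

Lemma d0_orn (d : FF) : orn d -> orn (d0 d).
Proof.
move=> Hd; apply: orn_intro.
  move=> u; rewrite ffunE; apply/goodP; split.
    by rewrite inE le_refl andbT (subsetP (ofn_sup d u)) // good_in // orn_goodd.
  move=> w; rewrite inE => /andP [Hw Hwu]; split => // Hne.
  by rewrite inE (le_step Hwu Hne) andbT (ofn_path Hd Hw (le_par w) (le_step Hwu Hne)).
move=> v w; rewrite !ffunE inE => /andP [Hw Hwv].
case: (eqVneq w v) => [->|Hne]; first exact: subxx.
apply/subsetP => t; rewrite !inE => /andP [Ht Htw].
by rewrite (subsetP (ofn_mono Hd Hw Hwv Hne) _ Ht) (le_trans Htw Hwv).
Qed.

Lemma valin_child (d : FF) u y : orn d -> Val (d0 d) u y -> y \in d u -> par y = u.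
Proof.
move=> Hd Hy Hyd.
have Hyu := good_le (orn_goodd u Hd) Hyd.
have [c [Hpc Hcu Hyc]] := le_child Hyu (Val_neq Hy).
have Hcd : c \in d u := good_path (orn_goodd u Hd) Hyd Hyc (etrans (congr1 (le c) (esym Hpc)) (le_par c)).
case: (eqVneq c y) => [<-|Hcy] //.
have Hcu' : le c u by rewrite -Hpc; apply: le_par.
have := Val_btw Hy Hyc Hcu' Hcy Hcu.
by rewrite ffunE inE (ofn_child Hd Hcd Hpc Hcu) Hyd Hyc.
Qed.

Lemma ofn_eq (d : FF) u x : orn d -> Val (d0 d) u x -> x \notin d u -> ofn d x = ofn d u.
Proof.
move=> Hd Hx Hxn.
have := Val_in Hx; rewrite ffunE inE => /andP [Hxo Hxu].
pose P := [pred w | [&& le x w, le w u, w != u & x \in d w]].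
have Px : P x by rewrite /= le_refl Hxu (Val_neq Hx) (good_in (orn_goodd x Hd)).
have [w [/and4P [Hxw Hwu Hwnu Hxdw] Hmax]] := ex_maxl Px.
have Hwo : w \in ofn d u := ofn_path Hd Hxo Hxw Hwu.
have Hsub := ofn_mono Hd Hwo Hwu Hwnu.
have Heq : ofn d w = ofn d u.
  apply/eqP; rewrite eqEsubset Hsub /=; apply/negP => Hns.
  case: (ofn_spec d w) => [[E _]|[b [Eb Hb _]]].
    by apply: Hns; rewrite E subsetT.
  have Hwb := good_le (orn_goodd b Hd) (subsetP (proper_sub Hb) _ (good_in (orn_goodd w Hd))).
  have Hxb : x \in d b := subsetP (proper_sub Hb) _ Hxdw.
  case: (eqVneq b u) => [Ebu|Hbu]; first by rewrite -Ebu Hxb in Hxn.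
  case/orP: (le_total Hwb Hwu) => Hle.
    have Pb : P b by rewrite /= (le_trans Hxw Hwb) Hle Hbu Hxb.
    by move: Hb; rewrite (Hmax _ Pb Hwb) properxx.
  have Hub : u \in d b := good_path (orn_goodd b Hd) (subsetP (proper_sub Hb) _ (good_in (orn_goodd w Hd))) Hwu Hle.
  have Hpr : d u \proper d b.
    rewrite properEneq (orn_sub Hd Hub) andbT; apply/negP => /eqP E.
    have Hbu' : b \in d u by rewrite E; apply: good_in (orn_goodd b Hd).
    by rewrite (le_antisym (good_le (orn_goodd u Hd) Hbu') Hle) eqxx in Hbu.
  by apply: Hns; rewrite Eb; apply: ofn_min.
case: (eqVneq w x) => [Ewx|Hwx]; first by rewrite -Ewx.
have := Val_btw Hx Hxw Hwu Hwx Hwnu.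
by rewrite ffunE inE Hxw andbT (subsetP (ofn_sup d w) _ Hxdw).
Qed.

Lemma main_iff (d : FF) (Hd : orn d) :
  in_Pop_image par d <->
  (forall (u : V) (o : {set V}), is_o d u o ->
     forall u' : V, childT par u' u -> u' \in d u ->
       DeltaS par (d u) u' != DeltaS par o u').
Proof.
split.
  case=> D [HD Hpop] u o Hio u' /andP [Hu'u /eqP Hpu'] Hu'd.
  have Hdv : forall v, d v = PopF D v by move=> v; rewrite -Hpop Pop_formula // ffunE.
  have HsubP : forall v, d v \subset D v.
    by move=> v; rewrite Hdv; apply/subsetP => t; rewrite inE => /andP [].
  have Hu'D := subsetP (HsubP u) _ Hu'd.
  have Hval : Val D u u'.
    apply: Val_intro => // w Hu'w Hwu Hwu' Hwnu.
    have Hne' : u' != w by rewrite eq_sym.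
    have := le_step Hu'w Hne'.
    by rewrite Hpu' => Huw; rewrite (le_antisym Hwu Huw) eqxx in Hwnu.
  have [y [Hm Hyu']] := ex_min Hval.
  have HyD := Val_in (Mn_val Hm).
  have Hyd : y \notin d u.
    rewrite Hdv inE HyD /=; apply/negPn/existsP; exists y; by rewrite Hm le_refl.
  suff Hyo : y \in o.
    apply/negP => /eqP E.
    have : y \in DeltaS par o u' by rewrite inE Hyo Hyu'.
    by rewrite -E inE (negbTE Hyd).
  case: Hio => [[[q ->] [Hq _]]|[_ ->]]; last by rewrite in_setT.
  have Huq : u \in d q := subsetP (proper_sub Hq) _ (good_in (orn_goodd u Hd)).
  have Hqu : q != u by apply: contraTneq Hq => ->; rewrite properxx.
  have HuDq : u \in D q := subsetP (HsubP q) _ Huq.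
  rewrite Hdv inE (subsetP (orn_sub HD HuDq) _ HyD) /=.
  apply/negP => /existsP [y' /andP [Hm' Hyy']].
  have Hyu := good_le (orn_goodd u HD) HyD.
  case: (boolP (le u y')) => Huy'.
    move: Huq; rewrite Hdv inE HuDq /=; move/negP; apply.
    by apply/existsP; exists y'; rewrite Hm' Huy'.
  have Hy'u : le y' u by case/orP: (le_total Hyy' Hyu) => // H; rewrite H in Huy'.
  have Hy'nu : u != y' by apply: contraNneq Huy' => ->; apply: le_refl.
  have Hy'D : y' \in D u := good_path (orn_goodd u HD) HyD Hyy' Hy'u.
  have Huq' : u != q by rewrite eq_sym.
  have := Val_btw (Mn_val Hm') Hy'u (good_le (orn_goodd q HD) HuDq) Hy'nu Huq'.
  by rewrite Hy'D.
move=> HC; exists (d0 d); split; first exact: d0_orn.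
have HD := d0_orn Hd.
rewrite Pop_formula //; apply/ffunP => u; rewrite !ffunE; apply/setP => z.
rewrite inE ffunE.
case: (boolP (z \in d u)) => Hz.
  rewrite inE (subsetP (ofn_sup d u) _ Hz) (good_le (orn_goodd u Hd) Hz) /=.
  apply/negP => /existsP [y /andP [Hm Hzy]].
  have Hy := Mn_val Hm.
  have := Val_in Hy; rewrite ffunE inE => /andP [Hyo Hyu].
  have Hyd : y \in d u := good_path (orn_goodd u Hd) Hz Hzy Hyu.
  have Hpy := valin_child Hd Hy Hyd.
  have Hch : childT par y u by rewrite /childT (Val_neq Hy) Hpy eqxx.
  have Hne := HC u _ (is_o_ofn d u) y Hch Hyd.
  have Hns : ~~ (DeltaS par (ofn d u) y \subset DeltaS par (d u) y).
    apply: contra Hne => Hs; rewrite eqEsubset Hs andbT.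
    apply/subsetP => t; rewrite !inE => /andP [Ht ->]; by rewrite (subsetP (ofn_sup d u) _ Ht).
  case/subsetPn: Hns => w; rewrite !inE => /andP [Hwo Hwy] Hwd.
  rewrite Hwy andbT in Hwd.
  have Hwu : w != u by apply: contraNneq Hwd => ->; apply: good_in (orn_goodd u Hd).
  have HwD : w \in d0 d u by rewrite ffunE inE Hwo (le_trans Hwy Hyu).
  have [x [Hx HwDx]] := ex_val HD HwD Hwu.
  have Hwx : le w x by move: HwDx; rewrite ffunE inE => /andP [].
  have Hyofn : ofn d y = d u := ofn_child Hd Hyd Hpy (Val_neq Hy).
  have Hcase : x = y -> False.
    move=> Exy; subst x; move: HwDx; rewrite ffunE inE Hyofn => /andP [H _].
    by rewrite H in Hwd.
  case/orP: (le_total Hwx Hwy) => Hle.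
    by apply: Hcase; apply: Mn_min Hm Hx Hle.
  case: (eqVneq x y) => [Exy|Hxy]; first exact: Hcase.
  have HyDx : y \in d0 d x := good_path (orn_goodd x HD) HwDx Hwy Hle.
  have Hxu : le x u by move: (Val_in Hx); rewrite ffunE inE => /andP [].
  by move: (Val_btw Hy Hle Hxu Hxy (Val_neq Hx)); rewrite HyDx.
apply/negbTE; apply/negP => /andP [HzE Hnex]; move/negP: Hnex; apply.
have Hzu : z != u by apply: contraNneq Hz => ->; apply: good_in (orn_goodd u Hd).
have HzD : z \in d0 d u by rewrite ffunE.
have [x [Hx HzDx]] := ex_val HD HzD Hzu.
have Hzx : le z x by move: HzDx; rewrite ffunE inE => /andP [].
have Hxd : x \notin d u.
  apply/negP => Hxd.
  have Hpx := valin_child Hd Hx Hxd.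
  move: HzDx; rewrite ffunE inE (ofn_child Hd Hxd Hpx (Val_neq Hx)) => /andP [H _].
  by rewrite H in Hz.
have Hofn := ofn_eq Hd Hx Hxd.
apply/existsP; exists x; rewrite Hzx andbT /Mn Hx /=.
apply/forallP => x'; apply/implyP => /andP [Hx' Hx'x]; apply/eqP; case: (eqVneq x' x) => // Hne; exfalso.
have Hxu : le x u by move: (Val_in Hx); rewrite ffunE inE => /andP [].
have Hne2 : x != x' by rewrite eq_sym.
have := Val_btw Hx' Hx'x Hxu Hne2 (Val_neq Hx).
rewrite ffunE inE Hx'x andbT Hofn.
by move: (Val_in Hx'); rewrite ffunE inE => /andP [-> _].
Qed.

End Tree.

Theorem theorem1p2 (V : finType) (r : V) (par : V -> V)
  (Htree : is_rooted_tree r par) (d : {ffun V -> {set V}})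
  (Hd : ornamentation par d) :
  in_Pop_image par d <->
  (forall (u : V) (o : {set V}), is_o d u o ->
     forall u' : V, childT par u' u -> u' \in d u ->
       DeltaS par (d u) u' != DeltaS par o u').
Proof. exact: (@main_iff V r par Htree d Hd). Qed.
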